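(* Fix $L,V,W,K>0$, $\pi\in(0,1)$ and $k_0\in[0,K]$, and regard $\phi_1=\frac{k_0}{k_1}\pi C$ and $\phi_2=\frac{K-k_0}{K-k_2}\pi C$ as functions of the cycle length $T>0$ (with $k_1,k_2$ as in the context). Then: (1) $\phi_1$ is continuous in $T$; $\phi_1$ equals its global minimum $\pi Vk_0$ for all $T\ge\frac1\pi\frac LV$, reaches its global maximum $Vk_0$ at $T=\frac1{j_1}\frac LV$, and reaches local minima $\frac{j_1+\pi}{j_1+1}Vk_0$ at $T=\frac1{j_1+\pi}\frac LV$, for positive integers $j_1$. In particular, for $\frac LV\le T\le\frac1\pi\frac LV$, $\phi_1=\frac{k_0L}{T}$. (2) $\phi_2$ is continuous in $T$; $\phi_2$ equals its global minimum $\pi(K-k_0)W$ for all $T\ge\frac1\pi\frac LW$, reaches its global maximum $(K-k_0)W$ at $T=\frac1{j_2}\frac LW$, and reaches local minima $\frac{j_2+\pi}{j_2+1}(K-k_0)W$ at $T=\frac1{j_2+\pi}\frac LW$, for positive integers $j_2$. In particular, for $\frac LW\le T\le\frac1\pi\frac LW$, $\phi_2=\frac{(K-k_0)L}{T}$.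
   Context: $\bar K=\frac{W}{V+W}K$, $C=V\bar K$. For a cycle length $T>0$ write $\frac LV=(j_1+\alpha_1)T$ with $j_1=\lfloor L/(VT)\rfloor$, $0\le\alpha_1<1$, and $\frac LW=(j_2+\alpha_2)T$ with $j_2=\lfloor L/(WT)\rfloor$, $0\le\alpha_2<1$; define $k_1=\frac{j_1+\min\{\alpha_1/\pi,1\}}{j_1+\alpha_1}\pi\bar K$ and $k_2=K-\frac{j_2+\min\{\alpha_2/\pi,1\}}{j_2+\alpha_2}\pi\frac CW$. (These arise from a ring road of length $L$ with LWR traffic, triangular fundamental diagram $\min\{Vk,(K-k)W\}$, average density $k_0$, and a pretimed signal of cycle length $T$ and effective green ratio $\pi$.) *)

(* Defs.v *)
From Stdlib Require Import Reals.
Open Scope R_scope.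

Definition rfloor (r : R) : R := IZR (Int_part r).

Definition Kbar (V W K : R) : R := W / (V + W) * K.
Definition Cap (V W K : R) : R := V * Kbar V W K.

Definition j1 (L V T : R) : R := rfloor (L / V / T).
Definition alpha1 (L V T : R) : R := L / V / T - j1 L V T.
Definition j2 (L W T : R) : R := rfloor (L / W / T).
Definition alpha2 (L W T : R) : R := L / W / T - j2 L W T.

Definition k1 (L V W K pi T : R) : R :=
  (j1 L V T + Rmin (alpha1 L V T / pi) 1) / (j1 L V T + alpha1 L V T) * pi * Kbar V W K.
Definition k2 (L V W K pi T : R) : R :=
  K - (j2 L W T + Rmin (alpha2 L W T / pi) 1) / (j2 L W T + alpha2 L W T)
        * pi * (Cap V W K / W).

Definition phi1 (L V W K pi k0 T : R) : R := k0 / k1 L V W K pi T * pi * Cap V W K.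
Definition phi2 (L V W K pi k0 T : R) : R :=
  (K - k0) / (K - k2 L V W K pi T) * pi * Cap V W K.

Definition local_min_pos (f : R -> R) (x : R) : Prop :=
  exists d : R, 0 < d /\ forall T : R, 0 < T -> Rabs (T - x) < d -> f x <= f T.

(* Main.v *)
From Stdlib Require Import Reals Lra Lia Psatz FunctionalExtensionality.
Require Import Defs.
Open Scope R_scope.

Definition Hf (pi x : R) : R := rfloor x + Rmin ((x - rfloor x) / pi) 1.

Lemma rfloor_spec x : rfloor x <= x < rfloor x + 1.
Proof. unfold rfloor; destruct (base_Int_part x); lra. Qed.

Lemma rfloor_unique z x : IZR z <= x < IZR z + 1 -> rfloor x = IZR z.
Proof.
  intros [H1 H2]. unfold rfloor, Int_part.
  rewrite <- (tech_up x (z+1)).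
  - f_equal; ring.
  - rewrite plus_IZR; simpl; lra.
  - rewrite plus_IZR; simpl; lra.
Qed.

Lemma floor_gap x y : x <= y -> rfloor x = rfloor y \/ rfloor x + 1 <= rfloor y.
Proof.
  intros Hxy. pose proof (rfloor_spec x). pose proof (rfloor_spec y).
  unfold rfloor in *.
  assert (Hlt : (Int_part x < Int_part y + 1)%Z).
  { apply lt_IZR. rewrite plus_IZR. simpl. lra. }
  destruct (Z.eq_dec (Int_part x) (Int_part y)) as [e|ne].
  - left; rewrite e; reflexivity.
  - right. assert (Hle : (Int_part x + 1 <= Int_part y)%Z) by lia.
    apply IZR_le in Hle. rewrite plus_IZR in Hle. simpl in Hle. lra.
Qed.

Lemma rmin_diff p q : q <= p -> 0 <= Rmin p 1 - Rmin q 1 <= p - q.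
Proof. intros. unfold Rmin; destruct (Rle_dec p 1); destruct (Rle_dec q 1); lra. Qed.

Lemma div_le_mono a b pi : 0 < pi -> a <= b -> a / pi <= b / pi.
Proof. intros. unfold Rdiv. apply Rmult_le_compat_r; [left; apply Rinv_0_lt_compat|]; lra. Qed.

Lemma Hf_lip pi x y : 0 < pi < 1 -> x <= y ->
  0 <= Hf pi y - Hf pi x <= (y - x) / pi.
Proof.
  intros Hpi Hxy. unfold Hf.
  pose proof (rfloor_spec x) as Sx. pose proof (rfloor_spec y) as Sy.
  destruct (floor_gap x y Hxy) as [e|g].
  - rewrite e. set (n := rfloor y) in *.
    assert (Hq : (x - n)/pi <= (y - n)/pi) by (apply div_le_mono; lra).
    pose proof (rmin_diff _ _ Hq).
    replace ((y - x)/pi) with ((y-n)/pi - (x-n)/pi) by (field; lra). lra.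
  - set (n := rfloor x) in *. set (m := rfloor y) in *.
    set (I := / pi).
    assert (HI : 1 < I). { unfold I. rewrite <- Rinv_1. apply Rinv_lt_contravar; lra. }
    replace ((y - x)/pi) with ((y - m) * I + (m - n) * I - (x - n) * I) by (unfold I; field; lra).
    replace ((y - m)/pi) with ((y - m) * I) by reflexivity.
    replace ((x - n)/pi) with ((x - n) * I) by reflexivity.
    assert (A1 : (x - n) * I < I) by nra.
    assert (A2 : 0 <= (x - n) * I) by nra.
    assert (A3 : 0 <= (y - m) * I) by nra.
    assert (A4 : 0 <= (m - n - 1) * (I - 1)) by nra.
    unfold Rmin; destruct (Rle_dec ((y-m)*I) 1); destruct (Rle_dec ((x-n)*I) 1); nra.
Qed.

Lemma Hf_cont pi x : 0 < pi < 1 -> continuity_pt (Hf pi) x.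
Proof.
  intros Hpi. unfold continuity_pt, continue_in, limit1_in, limit_in.
  intros eps Heps. exists (eps * pi). split; [nra|].
  intros y [_ Hd]. simpl in *. unfold R_dist in *.
  destruct (Rle_dec x y) as [l|l].
  - pose proof (Hf_lip pi x y Hpi l).
    rewrite Rabs_right in Hd by lra. rewrite Rabs_right by lra.
    assert ((y - x)/pi < eps).
    { set (t := (y-x)/pi). assert (t * pi = y - x) by (unfold t; field; lra). nra. }
    lra.
  - assert (l' : y <= x) by lra. pose proof (Hf_lip pi y x Hpi l').
    rewrite Rabs_left in Hd by lra. rewrite Rabs_left1 by lra.
    assert ((x - y)/pi < eps).
    { set (t := (x-y)/pi). assert (t * pi = x - y) by (unfold t; field; lra). nra. }
    lra.
Qed.

Lemma rfloor0 : rfloor 0 = 0.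
Proof. apply (rfloor_unique 0). simpl; lra. Qed.

Lemma floor_nonneg u : 0 <= u -> rfloor u = 0 \/ 1 <= rfloor u.
Proof.
  intros H. destruct (floor_gap 0 u H) as [e|g]; rewrite rfloor0 in *; lra.
Qed.

Lemma Hf_bounds pi u : 0 < pi < 1 -> 0 < u ->
  0 < Hf pi u /\ pi * Hf pi u <= u /\ u <= Hf pi u.
Proof.
  intros Hpi Hu. unfold Hf. pose proof (rfloor_spec u) as S.
  set (n := rfloor u) in *.
  assert (Hn : n = 0 \/ 1 <= n) by (apply floor_nonneg; lra).
  set (A := (u - n)/pi).
  assert (HA : A * pi = u - n) by (unfold A; field; lra).
  assert (A0 : 0 <= A) by nra.
  unfold Rmin; destruct (Rle_dec A 1); destruct Hn; nra.
Qed.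

Lemma div_le_div x p y q : 0 < p -> 0 < q -> x * q <= y * p -> x / p <= y / q.
Proof.
  intros. assert (E : (x/p - y/q) * (p*q) = x*q - y*p) by (field; lra).
  assert (0 < p*q) by nra. nra.
Qed.

Section Gen.
Variables (pi B c D E M Lc : R).
Hypotheses (Hpi : 0 < pi < 1) (HB : 0 < B) (Hc : 0 <= c) (HD : 0 < D)
  (HM : 0 < M) (HE : E = M * D) (HL : M * B = Lc).

Definition ff := fun T => c / (Hf pi (B / T) / (B / T) * pi * D) * pi * E.

Lemma ff_val T : 0 < T -> ff T = c * M * (B / T / Hf pi (B / T)).
Proof.
  intros HT. assert (Hu : 0 < B / T) by (apply Rdiv_lt_0_compat; lra).
  destruct (Hf_bounds pi _ Hpi Hu) as [H1 _].
  unfold ff. rewrite HE. field. repeat split; lra.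
Qed.

Lemma q_bounds u : 0 < u -> pi <= u / Hf pi u <= 1.
Proof.
  intros Hu. destruct (Hf_bounds pi _ Hpi Hu) as [H1 [H2 H3]].
  split.
  - apply Rle_trans with (pi/1); [right; field|apply div_le_div; lra].
  - apply Rle_trans with (1/1); [apply div_le_div; lra|right; field].
Qed.

Lemma ff_cont T : 0 < T -> continuity_pt ff T.
Proof.
  intros HT.
  assert (Hu : 0 < B / T) by (apply Rdiv_lt_0_compat; lra).
  destruct (Hf_bounds pi _ Hpi Hu) as [H1 _].
  assert (Cid : continuity_pt id T) by (apply derivable_continuous_pt, derivable_pt_id).
  assert (Cu : continuity_pt (fct_cte B / id)%F T).
  { apply continuity_pt_div; auto. apply continuity_pt_const; intros a b; reflexivity.
    unfold id; lra. }
  assert (CH : continuity_pt (comp (Hf pi) (fct_cte B / id)%F) T).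
  { apply continuity_pt_comp; auto. apply Hf_cont; auto. }
  assert (Cc : forall k, continuity_pt (fct_cte k) T).
  { intros k; apply continuity_pt_const; intros a b; reflexivity. }
  assert (Cden : continuity_pt ((comp (Hf pi) (fct_cte B / id)%F / (fct_cte B / id)%F) * fct_cte pi * fct_cte D)%F T).
  { apply continuity_pt_mult; auto. apply continuity_pt_mult; auto.
    apply continuity_pt_div; auto. unfold fct_cte, div_fct, id; lra. }
  assert (Cf : continuity_pt (fct_cte c / ((comp (Hf pi) (fct_cte B / id)%F / (fct_cte B / id)%F) * fct_cte pi * fct_cte D) * fct_cte pi * fct_cte E)%F T).
  { apply continuity_pt_mult; auto. apply continuity_pt_mult; auto.
    apply continuity_pt_div; auto.
    unfold fct_cte, div_fct, mult_fct, comp, id.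
    assert (0 < Hf pi (B / T) / (B / T)) by (apply Rdiv_lt_0_compat; lra).
    assert (0 < Hf pi (B / T) / (B / T) * pi * D) by (apply Rmult_lt_0_compat; [apply Rmult_lt_0_compat|]; lra).
    lra. }
  exact Cf.
Qed.
End Gen.

Lemma rfloor_nat (j : nat) x : INR j <= x < INR j + 1 -> rfloor x = INR j.
Proof. rewrite INR_IZR_INZ. apply rfloor_unique. Qed.

Section Gen2.
Variables (pi B c D E M Lc : R).
Hypotheses (Hpi : 0 < pi < 1) (HB : 0 < B) (Hc : 0 <= c) (HD : 0 < D)
  (HM : 0 < M) (HE : E = M * D) (HL : M * B = Lc).

Let f := ff pi B c D E.

Lemma g_lo T : 0 < T -> pi * M * c <= f T.
Proof.
  intros HT. unfold f. rewrite (ff_val pi B c D E M) by auto.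
  assert (Hu : 0 < B / T) by (apply Rdiv_lt_0_compat; lra).
  destruct (q_bounds pi Hpi _ Hu). assert (0 <= c * M) by nra. nra.
Qed.

Lemma g_hi T : 0 < T -> f T <= M * c.
Proof.
  intros HT. unfold f. rewrite (ff_val pi B c D E M) by auto.
  assert (Hu : 0 < B / T) by (apply Rdiv_lt_0_compat; lra).
  destruct (q_bounds pi Hpi _ Hu). assert (0 <= c * M) by nra. nra.
Qed.

Lemma u_le T : 0 < T -> B <= pi * T -> B / T <= pi.
Proof. intros. set (u := B/T). assert (u * T = B) by (unfold u; field; lra). nra. Qed.

Lemma g_large T : / pi * B <= T -> f T = pi * M * c.
Proof.
  intros HT.
  assert (0 < / pi * B) by (apply Rmult_lt_0_compat; [apply Rinv_0_lt_compat|]; lra).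
  assert (HT0 : 0 < T) by lra.
  unfold f. rewrite (ff_val pi B c D E M) by auto.
  assert (Hu : 0 < B / T) by (apply Rdiv_lt_0_compat; lra).
  assert (Hle : B / T <= pi).
  { apply u_le; auto. assert (pi * (/pi * B) = B) by (field; lra). nra. }
  unfold Hf. rewrite (rfloor_unique 0) by (simpl; lra).
  rewrite Rmin_left.
  - field. lra.
  - apply Rle_trans with (pi/pi); [apply div_le_mono; lra| right; field; lra].
Qed.

Lemma g_nat (j : nat) : (0 < j)%nat -> f (/ INR j * B) = M * c.
Proof.
  intros Hj. assert (HJ : 0 < INR j) by (apply lt_0_INR; lia).
  assert (HT : 0 < / INR j * B) by (apply Rmult_lt_0_compat; [apply Rinv_0_lt_compat|]; lra).
  unfold f. rewrite (ff_val pi B c D E M) by auto.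
  replace (B / (/ INR j * B)) with (INR j) by (field; lra).
  unfold Hf. rewrite (rfloor_nat j) by lra.
  replace ((INR j - INR j) / pi) with 0 by (field; lra).
  rewrite Rmin_left by lra. field. lra.
Qed.

Lemma g_mid T : B <= T <= / pi * B -> f T = c * Lc / T.
Proof.
  intros [H1 H2]. assert (HT : 0 < T) by lra.
  unfold f. rewrite (ff_val pi B c D E M) by auto.
  assert (Hu1 : B / T <= 1).
  { set (u := B/T). assert (u * T = B) by (unfold u; field; lra). nra. }
  assert (Hu2 : pi <= B / T).
  { set (u := B/T). assert (u * T = B) by (unfold u; field; lra).
    assert (pi * (/pi * B) = B) by (field; lra). nra. }
  assert (HH : Hf pi (B / T) = 1).
  { unfold Hf. destruct (Rle_lt_or_eq_dec _ _ Hu1) as [l|e].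
    - rewrite (rfloor_unique 0) by (simpl; lra).
      rewrite Rmin_right; [lra|].
      apply Rle_trans with (pi/pi); [right; field; lra|apply div_le_mono; lra].
    - rewrite e. rewrite (rfloor_unique 1) by (simpl; lra).
      replace ((1 - IZR 1)/pi) with 0 by (simpl; field; lra).
      rewrite Rmin_left by lra. simpl; lra. }
  rewrite HH. rewrite <- HL. field. lra.
Qed.

Lemma g_locmin (j : nat) : (0 < j)%nat ->
  f (/ (INR j + pi) * B) = (INR j + pi) / (INR j + 1) * M * c /\
  local_min_pos f (/ (INR j + pi) * B).
Proof.
  intros Hj. assert (HJ : 1 <= INR j) by (apply (le_INR 1); lia).
  set (n := INR j) in *.
  assert (HT : 0 < / (n + pi) * B) by (apply Rmult_lt_0_compat; [apply Rinv_0_lt_compat|]; lra).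
  assert (Hval : f (/ (n + pi) * B) = (n + pi) / (n + 1) * M * c).
  { unfold f. rewrite (ff_val pi B c D E M) by auto.
    replace (B / (/ (n + pi) * B)) with (n + pi) by (field; lra).
    unfold Hf. rewrite (rfloor_nat j) by (fold n; lra). fold n.
    replace ((n + pi - n) / pi) with 1 by (field; lra).
    rewrite Rmin_left by lra. field. lra. }
  split; [exact Hval|].
  set (T0 := / (n + pi) * B).
  set (d := Rmin (T0 - B / (n + 1)) (B / n - T0)).
  assert (Ha : B / (n + 1) < T0).
  { unfold T0. apply Rminus_gt_0_lt.
    replace (/ (n + pi) * B - B / (n + 1)) with (B * (1 - pi) / ((n+pi)*(n+1))) by (field; lra).
    apply Rdiv_lt_0_compat; nra. }
  assert (Hb : T0 < B / n).
  { unfold T0. apply Rminus_gt_0_lt.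
    replace (B / n - / (n + pi) * B) with (B * pi / ((n+pi)*n)) by (field; lra).
    apply Rdiv_lt_0_compat; nra. }
  exists d. split.
  { unfold d, Rmin; destruct (Rle_dec _ _); lra. }
  intros T HT0 Hd.
  assert (Hd1 : d <= T0 - B / (n+1)) by (unfold d; apply Rmin_l).
  assert (Hd2 : d <= B / n - T0) by (unfold d; apply Rmin_r).
  assert (Habs := Rabs_def2 _ _ Hd).
  assert (HT1 : B / (n+1) < T < B / n) by lra.
  unfold T0; rewrite Hval. unfold f. rewrite (ff_val pi B c D E M) by auto.
  set (u := B / T).
  assert (HuT : u * T = B) by (unfold u; field; lra).
  assert (Hq1 : B / (n+1) * (n+1) = B) by (field; lra).
  assert (Hq2 : B / n * n = B) by (field; lra).
  assert (Hu1 : n < u) by nra.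
  assert (Hu2 : u < n + 1) by nra.
  assert (Hfl : rfloor u = n) by (apply rfloor_nat; fold n; lra).
  assert (Hqq : (n + pi) / (n + 1) <= u / Hf pi u).
  { assert (HHp := Hf_bounds pi u Hpi ltac:(lra)). destruct HHp as [Hp _].
    apply div_le_div; [lra|lra|].
    unfold Hf. rewrite Hfl.
    set (A := (u - n)/pi). assert (HA : A * pi = u - n) by (unfold A; field; lra).
    unfold Rmin; destruct (Rle_dec A 1).
    - assert (0 <= n * (1 - pi) * (1 - A)) by (apply Rmult_le_pos; nra). nra.
    - assert (Hpa : pi * (A - 1) > 0) by (apply Rmult_lt_0_compat; lra). assert (n + pi <= u) by lra. apply Rmult_le_compat_r; lra. }
  assert (0 <= c * M) by nra.
  replace ((n + pi) / (n + 1) * M * c) with (c * M * ((n + pi) / (n + 1))) by ring.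
  apply Rmult_le_compat_l; auto.
Qed.
End Gen2.

Theorem lemma3p4 (L V W K pi k0 : R) :
  0 < L -> 0 < V -> 0 < W -> 0 < K -> 0 < pi < 1 -> 0 <= k0 <= K ->
  (* (1) *)
  ((forall T, 0 < T -> continuity_pt (phi1 L V W K pi k0) T) /\
   (forall T, 0 < T -> pi * V * k0 <= phi1 L V W K pi k0 T) /\
   (forall T, / pi * (L / V) <= T -> phi1 L V W K pi k0 T = pi * V * k0) /\
   (forall T, 0 < T -> phi1 L V W K pi k0 T <= V * k0) /\
   (forall j : nat, (0 < j)%nat ->
      phi1 L V W K pi k0 (/ INR j * (L / V)) = V * k0) /\
   (forall j : nat, (0 < j)%nat ->
      phi1 L V W K pi k0 (/ (INR j + pi) * (L / V))
        = (INR j + pi) / (INR j + 1) * V * k0 /\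
      local_min_pos (phi1 L V W K pi k0) (/ (INR j + pi) * (L / V))) /\
   (forall T, L / V <= T <= / pi * (L / V) -> phi1 L V W K pi k0 T = k0 * L / T))
  /\
  (* (2) *)
  ((forall T, 0 < T -> continuity_pt (phi2 L V W K pi k0) T) /\
   (forall T, 0 < T -> pi * (K - k0) * W <= phi2 L V W K pi k0 T) /\
   (forall T, / pi * (L / W) <= T -> phi2 L V W K pi k0 T = pi * (K - k0) * W) /\
   (forall T, 0 < T -> phi2 L V W K pi k0 T <= (K - k0) * W) /\
   (forall j : nat, (0 < j)%nat ->
      phi2 L V W K pi k0 (/ INR j * (L / W)) = (K - k0) * W) /\
   (forall j : nat, (0 < j)%nat ->
      phi2 L V W K pi k0 (/ (INR j + pi) * (L / W))
        = (INR j + pi) / (INR j + 1) * (K - k0) * W /\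
      local_min_pos (phi2 L V W K pi k0) (/ (INR j + pi) * (L / W))) /\
   (forall T, L / W <= T <= / pi * (L / W) -> phi2 L V W K pi k0 T = (K - k0) * L / T)).
Proof.
  intros HL HV HW HK Hpi Hk0.
  assert (HKb : 0 < Kbar V W K).
  { unfold Kbar. apply Rmult_lt_0_compat; [apply Rdiv_lt_0_compat|]; lra. }
  assert (HCap : 0 < Cap V W K) by (unfold Cap; apply Rmult_lt_0_compat; lra).
  assert (HB1 : 0 < L / V) by (apply Rdiv_lt_0_compat; lra).
  assert (HB2 : 0 < L / W) by (apply Rdiv_lt_0_compat; lra).
  assert (E1 : phi1 L V W K pi k0 = ff pi (L / V) k0 (Kbar V W K) (Cap V W K)).
  { apply functional_extensionality; intro T.
    unfold phi1, k1, alpha1, j1, ff, Hf.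
    replace (rfloor (L / V / T) + (L / V / T - rfloor (L / V / T))) with (L / V / T) by ring.
    reflexivity. }
  assert (E2 : phi2 L V W K pi k0 = ff pi (L / W) (K - k0) (Cap V W K / W) (Cap V W K)).
  { apply functional_extensionality; intro T.
    unfold phi2, k2, alpha2, j2, ff, Hf.
    replace (rfloor (L / W / T) + (L / W / T - rfloor (L / W / T))) with (L / W / T) by ring.
    f_equal. f_equal. f_equal. ring. }
  assert (HE1 : Cap V W K = V * Kbar V W K) by reflexivity.
  assert (HE2 : Cap V W K = W * (Cap V W K / W)) by (field; lra).
  assert (HL1 : V * (L / V) = L) by (field; lra).
  assert (HL2 : W * (L / W) = L) by (field; lra).
  assert (Hc2 : 0 <= K - k0) by lra.
  assert (HD2 : 0 < Cap V W K / W) by (apply Rdiv_lt_0_compat; lra).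
  rewrite E1, E2. split.
  - split; [intros; apply ff_cont; try exact Hpi; try assumption; try lra|].
    split; [intros; apply (g_lo pi (L/V) k0 _ _ V); try exact Hpi; try assumption; try lra|].
    split; [intros; apply (g_large pi (L/V) k0 _ _ V); try exact Hpi; try assumption; try lra|].
    split; [intros; apply (g_hi pi (L/V) k0 _ _ V); try exact Hpi; try assumption; try lra|].
    split; [intros; apply (g_nat pi (L/V) k0 _ _ V); try exact Hpi; try assumption; try lra|].
    split; [intros; apply (g_locmin pi (L/V) k0 _ _ V); try exact Hpi; try assumption; try lra|].
    intros; apply (g_mid pi (L/V) k0 _ _ V); try exact Hpi; try assumption; try lra.
  - split; [intros; apply ff_cont; try exact Hpi; try assumption; try lra|].
    split; [intros; replace (pi * (K - k0) * W) with (pi * W * (K - k0)) by ring;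
            apply (g_lo pi (L/W) (K-k0) _ _ W); try exact Hpi; try assumption; try lra|].
    split; [intros; replace (pi * (K - k0) * W) with (pi * W * (K - k0)) by ring;
            apply (g_large pi (L/W) (K-k0) _ _ W); try exact Hpi; try assumption; try lra|].
    split; [intros; replace ((K - k0) * W) with (W * (K - k0)) by ring;
            apply (g_hi pi (L/W) (K-k0) _ _ W); try exact Hpi; try assumption; try lra|].
    split; [intros; replace ((K - k0) * W) with (W * (K - k0)) by ring;
            apply (g_nat pi (L/W) (K-k0) _ _ W); try exact Hpi; try assumption; try lra|].
    split; [intros; replace ((INR j + pi) / (INR j + 1) * (K - k0) * W)
                      with ((INR j + pi) / (INR j + 1) * W * (K - k0)) by ring;
            apply (g_locmin pi (L/W) (K-k0) _ _ W); try exact Hpi; try assumption; try lra|].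
    intros; apply (g_mid pi (L/W) (K-k0) _ _ W); try exact Hpi; try assumption; try lra.
Qed.
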